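(* There exists a hypothesis class $\mathcal H$ with VC dimension $1$ such that every protocol that learns $\mathcal H$ properly with error parameter $\epsilon$ has sample complexity at least $\tilde\Omega(1/\epsilon)$. Moreover, this holds even if the input sample is realizable by $\mathcal H$.
   Context: Communication model: Let $\mathcal X$ be a domain and $\mathcal Z=\mathcal X\times\{\pm1\}$ the set of examples. A sample is a finite sequence of examples. Alice receives a sample $S_a$ and Bob a sample $S_b$; the joint sample $S=(S_a,S_b)$ is their concatenation, arbitrarily split. A deterministic protocol proceeds by messages, each either a single example from the sender's own input sample or a single bit, depending only on the sender's input and previous messages; output is determined by the messages. Each example or bit costs one unit; sample complexity is the maximal number of units transmitted. $L_S(h)=\frac{1}{|S|}\sum_{(x,y)\in S}1[h(x)\ne y]$; $S$ is realizable by $\mathcal H$ if $L_S(h)=0$ for some $h\in\mathcal H$. A protocol learns $\mathcal H$ with error $\epsilon$ if it always outputs $h$ with $L_S(h)\le\min_{f\in\mathcal H}L_S(f)+\epsilon$; it learns properly if its output always lies in $\mathcal H$. $\tilde\Omega$ denotes a lower bound up to logarithmic factors. *)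

(* Defs.v *)
From mathcomp Require Import ssreflect ssrfun ssrbool eqtype ssrnat seq.
From Stdlib Require Import Reals.

Set Implicit Arguments.
Unset Strict Implicit.
Unset Printing Implicit Defensive.

Section Learning.
Variable X : eqType.

(* An example is a point together with a label; +1 is encoded by true, -1 by false. *)
Definition example := (X * bool)%type.

Definition emp_loss (S : seq example) (h : X -> bool) : R :=
  (INR (count (fun z : example => h z.1 != z.2) S) / INR (size S))%R.

Definition hclass := (X -> bool) -> Prop.

Definition realizable (H : hclass) (S : seq example) : Prop :=
  exists h, H h /\ emp_loss S h = 0%R.

Definition shatters (H : hclass) (s : seq X) : Prop :=
  forall f : X -> bool, exists h, H h /\ forall x, x \in s -> h x = f x.

Definition VC_dim (H : hclass) (d : nat) : Prop :=
  (exists s, uniq s /\ size s = d /\ shatters H s) /\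
  (forall s, uniq s -> shatters H s -> size s <= d).

(* Messages: a single example or a single bit; each costs one unit. *)
Inductive msg := MEx of example | MBit of bool.

(* A deterministic two-party protocol.  [turn t] says, from the transcript t
   so far, whether the protocol halts (None), Alice speaks (Some true) or Bob
   speaks (Some false). *)
Record protocol := Protocol {
  turn : seq msg -> option bool;
  speak_a : seq example -> seq msg -> msg;
  speak_b : seq example -> seq msg -> msg;
  output : seq msg -> (X -> bool)
}.

Fixpoint run (P : protocol) (Sa Sb : seq example) (n : nat) : seq msg :=
  match n with
  | 0 => [::]
  | n'.+1 =>
      let t := run P Sa Sb n' in
      match turn P t with
      | None => t
      | Some true => rcons t (speak_a P Sa t)
      | Some false => rcons t (speak_b P Sb t)
      end
  end.

Definition legal_msg (S : seq example) (m : msg) : bool :=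
  match m with MEx z => z \in S | MBit _ => true end.

Definition runs_within (P : protocol) (T : nat) (Sa Sb : seq example) : Prop :=
  turn P (run P Sa Sb T) = None /\
  (forall k, k < T ->
     let t := run P Sa Sb k in
     match turn P t with
     | Some true => legal_msg Sa (speak_a P Sa t)
     | Some false => legal_msg Sb (speak_b P Sb t)
     | None => true
     end).

Definition proper_learner_realizable (H : hclass) (eps : R) (P : protocol)
  (T : nat) : Prop :=
  forall Sa Sb : seq example, realizable H (Sa ++ Sb) ->
    runs_within P T Sa Sb /\
    let h := output P (run P Sa Sb T) in
    H h /\ forall f, H f -> (emp_loss (Sa ++ Sb) h <= emp_loss (Sa ++ Sb) f + eps)%R.

End Learning.

(* Main.v *)
Require Import Defs.
From Stdlib Require Import Reals Lra Lia ZArith.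
From mathcomp Require Import ssreflect ssrfun ssrbool eqtype ssrnat seq.
From mathcomp Require Import choice fintype finfun.
From mathcomp Require Import zify.

Definition Xt : eqType := (nat * nat)%type.
Definition hyp (n t : nat) : Xt -> bool :=
  fun x => (x.1 == n) && ((x.2 == 0) || (x.2 == t)).
Definition Hc : hclass Xt := fun h => exists n t, 0 < t <= n /\ h = hyp n t.

Definition child (i : nat) (c : bool) : nat := (2*i + 1 + c).

Lemma child_eq i j c d : (child i c == child j d) = (i == j) && (c == d).
Proof.
apply/eqP/andP.
  by rewrite /child; case: c; case: d => /= H; split; apply/eqP; lia.
by case=> /eqP -> /eqP ->.
Qed.

Lemma child_neq0 i c : (child i c == 0) = false.
Proof. by rewrite /child addn1 addSn. Qed.

Definition Aset m (b : {ffun 'I_m -> bool}) : seq (example Xt) :=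
  ((2*m, 0), true) :: [seq ((2*m, child i (~~ b i)), false) | i : 'I_m <- enum 'I_m].
Definition Bset m (b : {ffun 'I_m -> bool}) : seq (example Xt) :=
  [seq ((2*m, child i (b i)), false) | i : 'I_m <- enum 'I_m].

Arguments Aset {m}.
Arguments Bset {m}.

Lemma cross_real m (b1 b2 : {ffun 'I_m -> bool}) :
  b1 != b2 -> realizable Hc (Aset b1 ++ Bset b2).
Proof.
move=> Hne.
case: (pickP (fun i => b1 i != b2 i)) => [i Hi | H0]; last first.
  case/negP: Hne; apply/eqP/ffunP => i; apply/eqP.
  by move: (H0 i) => /= /negbFE.
exists (hyp (2*m) (child i (b1 i))); split.
  exists (2*m), (child i (b1 i)); split => //.
  have := ltn_ord i; rewrite /child; case: (b1 i) => /=; lia.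
rewrite /emp_loss (_ : count _ _ = 0); last first.
  apply/eqP; rewrite eqn0Ngt -has_count; apply/hasPn => z.
  rewrite mem_cat => /orP [|].
    rewrite inE => /orP [/eqP -> | /mapP [j _ ->]].
      by rewrite /hyp /= !eqxx.
    rewrite /hyp /= eqxx child_neq0 /= child_eq.
    case: (eqVneq j i) => [-> | ne]; first by rewrite eqxx; case: (b1 i).
    by rewrite (_ : (nat_of_ord j == nat_of_ord i) = false) //; apply/negbTE; exact: ne.
  move=> /mapP [j _ ->].
  rewrite /hyp /= eqxx child_neq0 /= child_eq.
  case: (eqVneq j i) => [-> | ne]; first by rewrite eqxx; move: Hi; case: (b1 i); case: (b2 i).
  by rewrite (_ : (nat_of_ord j == nat_of_ord i) = false) //; apply/negbTE; exact: ne.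
by rewrite /Rdiv Rmult_0_l.
Qed.

Definition gr m (z : example Xt) : bool :=
  [&& z.1.1 == 2*m, z.1.2 <= 2*m & z.2 == (z.1.2 == 0)].

Lemma gr_A m (b : {ffun 'I_m -> bool}) z : z \in Aset b -> gr m z.
Proof.
rewrite inE => /orP [/eqP -> | /mapP [j _ ->]]; first by rewrite /gr /= !eqxx.
rewrite /gr /= eqxx child_neq0 /=.
have := ltn_ord j; rewrite /child; case: (b j) => /=; lia.
Qed.

Lemma gr_B m (b : {ffun 'I_m -> bool}) z : z \in Bset b -> gr m z.
Proof.
move=> /mapP [j _ ->].
rewrite /gr /= eqxx child_neq0 /=.
have := ltn_ord j; rewrite /child; case: (b j) => /=; lia.
Qed.

Definition okm m (x : msg Xt) : bool :=
  match x with MEx z => gr m z | MBit _ => true end.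

Lemma legal_ok m (S : seq (example Xt)) x :
  (forall z, z \in S -> gr m z) -> legal_msg S x -> okm m x.
Proof. by case: x => [z|b] //= H; apply: H. Qed.

Definition sym (x : msg Xt) : nat :=
  match x with MBit b => nat_of_bool b | MEx z => z.1.2 + 2 end.

Lemma sym_le m x : okm m x -> sym x < (2*m+2).+1.
Proof.
case: x => [[[x1 x2] y]|b] /=; last by case: b; lia.
by rewrite /gr /= => /and3P [_ H _]; lia.
Qed.

Lemma sym_inj m x y : okm m x -> okm m y -> sym x = sym y -> x = y.
Proof.
case: x => [[[x1 x2] y1]|b]; case: y => [[[x1' x2'] y1']|b'] /=.
- rewrite /gr /= => /and3P [/eqP -> _ /eqP ->] /and3P [/eqP -> _ /eqP ->] H.
  by have -> : x2 = x2' by lia.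
- by case: b' => _ _; lia.
- by case: b => _ _; lia.
- by case: b; case: b'.
Qed.

Definition msg_at (P : protocol Xt) A B k : nat :=
  let t := run P A B k in
  match turn P t with
  | None => 0
  | Some true => sym (speak_a P A t)
  | Some false => sym (speak_b P B t)
  end.

Lemma zero_loss (S : seq (example Xt)) h eps :
  (INR (size S) * eps < 1)%R -> (emp_loss S h <= eps)%R ->
  forall z, z \in S -> h z.1 = z.2.
Proof.
move=> Hs Hl.
have Hc0 : count (fun z : example Xt => h z.1 != z.2) S = 0.
  case: (posnP (count (fun z : example Xt => h z.1 != z.2) S)) => // Hp.
  have Hsz : (0 < size S) by apply: leq_trans Hp (count_size _ _).
  have HS : (0 < INR (size S))%R by apply: lt_0_INR; apply/ltP.
  have H1 : (1 <= INR (count (fun z : example Xt => h z.1 != z.2) S))%R.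
    by apply: (le_INR 1); apply/leP.
  move: Hl; rewrite /emp_loss => Hl.
  have : (INR (count (fun z : example Xt => h z.1 != z.2) S) <= eps * INR (size S))%R.
    apply (Rmult_le_reg_r (/ INR (size S))); first by apply: Rinv_0_lt_compat.
    rewrite Rmult_assoc Rinv_r; last by lra.
    by rewrite Rmult_1_r.
  lra.
move=> z Hz; apply/eqP; apply/negPn/negP => Hn.
have : 0 < count (fun z : example Xt => h z.1 != z.2) S.
  by rewrite -has_count; apply/hasP; exists z.
by rewrite Hc0.
Qed.

Arguments cross_real {m b1 b2}.
Arguments sym_inj {m x y}.

Lemma key m eps (P : protocol Xt) T :
  (INR (2*m+1) * eps < 1)%R -> proper_learner_realizable Hc eps P T ->
  2^m <= ((2*m+2).+1)^T.
Proof.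
move=> Heps HL.
pose F (b : {ffun 'I_m -> bool}) : {ffun 'I_T -> 'I_(2*m+2).+1} :=
  [ffun k : 'I_T => inord (msg_at P (Aset b) (Bset b) k)].
have Finj : injective F.
  move=> b1 b2 HF; apply/eqP; apply/negPn/negP => Hne.
  have Hne' : b2 != b1 by rewrite eq_sym.
  have [W12 L12] := HL _ _ (cross_real Hne).
  have [W21 L21] := HL _ _ (cross_real Hne').
  have claim : forall k, k <= T ->
    run P (Aset b1) (Bset b2) k = run P (Aset b1) (Bset b1) k /\
    run P (Aset b2) (Bset b1) k = run P (Aset b1) (Bset b1) k /\
    run P (Aset b2) (Bset b2) k = run P (Aset b1) (Bset b1) k.
    elim => [|k IH] HkT; first by [].
    have [e1 [e2 e3]] := IH (ltnW HkT).
    have HF' := congr1 (fun f : {ffun 'I_T -> 'I_(2*m+2).+1} => nat_of_ord (f (Ordinal HkT))) HF.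
    rewrite /= !ffunE /msg_at e3 in HF'.
    have Lg12 := W12.2 k HkT; have Lg21 := W21.2 k HkT.
    rewrite /= e1 in Lg12; rewrite /= e2 in Lg21.
    rewrite /= e1 e2 e3.
    set t := run P (Aset b1) (Bset b1) k in HF' Lg12 Lg21 *.
    case Ht: (turn P t) => [[]|] //; rewrite Ht in HF' Lg12 Lg21.
    + have o1 : okm m (speak_a P (Aset b1) t) by apply: legal_ok Lg12; apply: gr_A.
      have o2 : okm m (speak_a P (Aset b2) t) by apply: legal_ok Lg21; apply: gr_A.
      rewrite !inordK ?sym_le // in HF'.
      by rewrite (sym_inj o2 o1 (esym HF')).
    + have o1 : okm m (speak_b P (Bset b2) t) by apply: legal_ok Lg12; apply: gr_B.
      have o2 : okm m (speak_b P (Bset b1) t) by apply: legal_ok Lg21; apply: gr_B.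
      rewrite !inordK ?sym_le // in HF'.
      by rewrite (sym_inj o1 o2 (esym HF')).
  have [e1 [e2 _]] := claim T (leqnn T).
  case: L12 => Hh Hl12; case: L21 => _ Hl21.
  rewrite e2 -e1 in Hl21.
  set h := output P (run P (Aset b1) (Bset b2) T) in Hh Hl12 Hl21.
  have Hsz : forall b b' : {ffun 'I_m -> bool}, size (Aset b ++ Bset b') = 2*m+1.
    move=> b b'; rewrite size_cat /Aset /Bset (_ : forall (s : seq (example Xt)) x, size (x :: s) = (size s).+1) // !size_map -enumT size_enum_ord; lia.
  have cons1 : forall z, z \in Aset b1 ++ Bset b2 -> h z.1 = z.2.
    apply: (@zero_loss _ _ eps); first by rewrite Hsz.
    case: (cross_real Hne) => f [Hf Hf0].
    by have := Hl12 f Hf; rewrite Hf0 Rplus_0_l.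
  have cons2 : forall z, z \in Aset b2 ++ Bset b1 -> h z.1 = z.2.
    apply: (@zero_loss _ _ eps); first by rewrite Hsz.
    case: (cross_real Hne') => f [Hf Hf0].
    by have := Hl21 f Hf; rewrite Hf0 Rplus_0_l.
  case: Hh => n' [t0 [/andP [Ht0 Ht0n] Heqh]].
  have hu := cons1 ((2*m, 0), true); rewrite mem_cat inE eqxx /= in hu.
  have := hu isT; rewrite Heqh /hyp /= andbT => /eqP En.
  subst n'.
  have Hodd := odd_double_half t0.-1; rewrite -mul2n in Hodd.
  have Him : t0.-1./2 < m by move: Hodd; case: (odd t0.-1) => /=; lia.
  pose io := Ordinal Him.
  have Hch : forall c, c = odd t0.-1 -> child io c = t0.
    by move=> c ->; rewrite /child /=; move: Hodd; case: (odd t0.-1) => /=; lia.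
  have Htrue : h (2*m, t0) = true by rewrite Heqh /hyp /= !eqxx orbT.
  have ioin : io \in enum 'I_m by rewrite mem_enum.
  case Hc: (odd t0.-1 == b1 io).
  - have Hz : ((2*m, t0), false) \in Aset b2 ++ Bset b1.
      rewrite mem_cat; apply/orP; right.
      rewrite -(Hch (b1 io)); last by rewrite (eqP Hc).
      exact: (map_f (fun i : 'I_m => ((2*m, child i (b1 i)), false)) ioin).
    by have := cons2 _ Hz; rewrite Htrue.
  - have Hz : ((2*m, t0), false) \in Aset b1 ++ Bset b2.
      rewrite mem_cat; apply/orP; left; rewrite inE; apply/orP; right.
      rewrite -(Hch (~~ b1 io)); last by move: Hc; case: (odd _); case: (b1 io).
      exact: (map_f (fun i : 'I_m => ((2*m, child i (~~ b1 i)), false)) ioin).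
    by have := cons1 _ Hz; rewrite Htrue.
have := leq_card F Finj.
by rewrite !card_ffun !card_ord card_bool.
Qed.

Lemma vc1 : VC_dim Hc 1.
Proof.
split.
  exists [:: ((1, 0) : Xt)]; split => //; split => // f.
  case Hf: (f (1, 0)).
    exists (hyp 1 1); split; first by exists 1, 1.
    by move=> x; rewrite inE => /eqP ->; rewrite Hf.
  exists (hyp 2 1); split; first by exists 2, 1.
  by move=> x; rewrite inE => /eqP ->; rewrite Hf.
case=> [|a [|b s]] //= Hu Hsh.
have Hab : a != b by move: Hu; rewrite inE negb_or => /andP [/andP [] ].
have [h [[n [t [_ ->]]] Hh]] := Hsh (fun _ => true).
have [h' [[n' [t' [_ ->]]] Hh']] := Hsh (fun x : Xt => x.2 != 0).
have Ha := Hh a; have Hb := Hh b; have Ha' := Hh' a; have Hb' := Hh' b.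
rewrite !inE !eqxx /= ?orbT in Ha Hb Ha' Hb'.
have {}Ha := Ha isT; have {}Hb := Hb isT; have {}Ha' := Ha' isT; have {}Hb' := Hb' isT.
clear Hu Hh Hh' Hsh; move: Hab Ha Hb Ha' Hb'; case: a => a1 a2; case: b => b1 b2; rewrite /hyp /=.
move=> Hab.
have Hne : ~ (a1 = b1 /\ a2 = b2) by move=> [e1 e2]; move: Hab; rewrite e1 e2 eqxx.
move: Hne.
case: (eqVneq a1 n) => [->|] /=; last by [].
case: (eqVneq b1 n) => [->|] /=; last by [].
case: (eqVneq a2 0) => [->|a20] /=; case: (eqVneq b2 0) => [->|b20] //=.
- by move=> H; exfalso; apply: H.
- by move=> _ _ _; case: (n == n').
- by move=> _ _ _; case: (n == n').
- move=> H /eqP e1 /eqP e2; exfalso; apply: H; split => //; by rewrite e1 e2.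
Qed.

Arguments key {m eps P T}.

Lemma INR_expn a n : INR (a ^ n) = (INR a ^ n)%R.
Proof. elim: n => [|n IH] //. by rewrite expnS -multE mult_INR IH. Qed.

Lemma ln_le' x y : (0 < x)%R -> (x <= y)%R -> (ln x <= ln y)%R.
Proof.
move=> Hx Hxy; case: (Rle_lt_or_eq_dec _ _ Hxy) => [H|->]; last by right.
by left; apply: ln_increasing.
Qed.

Theorem theorem2 :
  exists (X : eqType) (H : hclass X),
    VC_dim H 1 /\
    exists (c : R) (k : nat) (eps0 : R),
      (0 < c)%R /\ (0 < eps0)%R /\
      forall eps : R, (0 < eps)%R -> (eps <= eps0)%R ->
      forall (P : protocol X) (T : nat),
        proper_learner_realizable H eps P T ->
        (c / (eps * (1 + ln (1 / eps)) ^ k) <= INR T)%R.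
Proof.
exists Xt, Hc; split; first exact: vc1.
exists (1/8)%R, 1, (1/12)%R; split; first lra; split; first lra.
move=> eps He0 He1 P T HL.
set r := (/ (4 * eps))%R.
have Hreps : (r * eps = /4)%R by rewrite /r; field; lra.
have Hinv : (1 / eps = 4 * r)%R by rewrite /r; field; lra.
have Hr : (3 <= r)%R by nra.
have [Hup1 Hup2] := archimed r.
have Hz : (0 <= up r)%Z by apply: le_IZR; lra.
set m := Z.to_nat (up r).
have HM : INR m = IZR (up r) by rewrite /m INR_IZR_INZ Z2Nat.id.
have Hm1 : (INR (2*m+1) = 2 * INR m + 1)%R.
  by rewrite -plusE -multE plus_INR mult_INR /=; ring.
have Hm3 : (INR (2*m+2).+1 = 2 * INR m + 3)%R.
  by rewrite S_INR -plusE -multE plus_INR mult_INR /=; ring.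
have HMr1 : (INR m <= r + 1)%R by lra.
have HMr : (r < INR m)%R by lra.
have Hme : (INR m * eps <= /4 + eps)%R.
  have := Rmult_le_compat_r eps _ _ (Rlt_le _ _ He0) HMr1; lra.
have Heps : (INR (2*m+1) * eps < 1)%R by rewrite Hm1; lra.
have Hk := key Heps HL.
have Hk' : (2 ^ m <= (2 * INR m + 3) ^ T)%R.
  rewrite -Hm3 -INR_expn (_ : 2%R = INR 2) // -INR_expn.
  by apply: le_INR; apply/leP.
have Hpos3 : (0 < 2 * INR m + 3)%R by lra.
have Hln := ln_le' _ _ (pow_lt 2 m Rlt_0_2) Hk'.
rewrite !ln_pow // in Hln; last by lra.
have Hl2 := ln_lt_2.
have HlnM : (0 < ln (2 * INR m + 3))%R.
  rewrite -ln_1; apply: ln_increasing; lra.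
have HlnE : (ln (2 * INR m + 3) <= ln (1 / eps))%R.
  apply: ln_le' => //; rewrite Hinv; lra.
set L := (1 + ln (1 / eps))%R.
have HL0 : (0 < L)%R by rewrite /L; lra.
have HT0 : (0 <= INR T)%R by apply: pos_INR.
have HTL : (r / 2 <= INR T * L)%R.
  have : (INR T * ln (2 * INR m + 3) <= INR T * L)%R.
    by apply: Rmult_le_compat_l => //; rewrite /L; lra.
  have : (r / 2 <= INR m * ln 2)%R by nra.
  lra.
have -> : (1 / 8 / (eps * L ^ 1) = (r / 2) * / L)%R.
  by rewrite /r /=; field; lra.
have -> : INR T = (INR T * L * / L)%R by field; lra.
apply: Rmult_le_compat_r => //.
by apply: Rlt_le; apply: Rinv_0_lt_compat.
Qed.
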